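(* For every integer $n\ge1$ and every $u\in V$, $\Pr(E_{7u})<36\left(3\zeta(3)+\tfrac18\right)\dfrac{\ln(2n)}{\ln^{3}(n+1)}$, where $\zeta(3)=\sum_{i\ge1} i^{-3}$.
   Context: For an integer $n\ge1$, the $n$-octahedral graph $G'_n=(V,E')$ is the undirected graph with vertex set $V=\{u\in\mathbb{Z}^3:|u_1|+|u_2|+|u_3|=n\}$ and edge set $E'=\{\{v,w\}\subset V: v\neq w,\ |v_i-w_i|\le 1 \text{ for all } i=1,2,3\}$. For $u,v\in V$, $d_{uv}$ denotes the shortest-path distance in $G'_n$, and $Z_u=\left(\sum_{w\in V\setminus\{u\}} d_{uw}^{-2}\right)^{-1}$. The OSW random graph $G_n=(V,E)$ is the directed graph in which, for every $\{u,v\}\in E'$, both $(u,v),(v,u)\in E$, and in addition each vertex $u\in V$, independently of the others, chooses one vertex $v\in V\setminus\{u\}$ with probability $Z_u d_{uv}^{-2}$ and the long-range edge $(u,v)$ is added; $C_{uv}$ denotes the event that $u$ chooses $v$. For an ordered pair $(x,y)$ of distinct vertices, say $(x,y)$ is of type $s$ if $\{x,y\}\in E'$, and of type $w$ if $d_{xy}\ge2$ and $C_{xy}$ occurs. A C3 rooted at $u$ of type $(t_1,t_2,t_3)\in\{s,w\}^3$ is a triple $(u,a,b)$ of pairwise distinct vertices such that $(u,a)$ is of type $t_1$, $(a,b)$ is of type $t_2$ and $(b,u)$ is of type $t_3$. $E_{7u}$ is the event that there exists a C3 rooted at $u$ of type $(w,w,w)$. *)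

(* Defs.v *)
From Stdlib Require Import Reals ZArith List Bool.
Import ListNotations.
Open Scope R_scope.

Definition pt : Type := (Z * Z * Z)%type.

Definition ptb (p q : pt) : bool :=
  match p, q with
  | (x1, y1, z1), (x2, y2, z2) => (Z.eqb x1 x2 && Z.eqb y1 y2 && Z.eqb z1 z2)%bool
  end.

Definition zrange (n : nat) : list Z :=
  map (fun i => (Z.of_nat i - Z.of_nat n)%Z) (seq 0 (2 * n + 1)).

Definition Vn (n : nat) : list pt :=
  filter (fun p : pt => match p with (x, y, z) =>
            Z.eqb (Z.abs x + Z.abs y + Z.abs z) (Z.of_nat n) end)
    (list_prod (list_prod (zrange n) (zrange n)) (zrange n)).

Definition adjb (p q : pt) : bool :=
  match p, q with
  | (x1, y1, z1), (x2, y2, z2) =>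
      (negb (ptb p q) && Z.leb (Z.abs (x1 - x2)) 1
        && Z.leb (Z.abs (y1 - y2)) 1 && Z.leb (Z.abs (z1 - z2)) 1)%bool
  end.

Fixpoint withinb (n k : nat) (u w : pt) : bool :=
  match k with
  | O => ptb u w
  | S k' => (withinb n k' u w ||
             existsb (fun v => withinb n k' u v && adjb v w) (Vn n))%bool
  end.

Fixpoint search (P : nat -> bool) (k0 fuel : nat) : nat :=
  match fuel with
  | O => k0
  | S f => if P k0 then k0 else search P (S k0) f
  end.

(* shortest-path distance d_{uw} in G'_n (G'_n is connected, so the
   distance is < |V| and is found by the search) *)
Definition dist (n : nat) (u w : pt) : nat :=
  search (fun k => withinb n k u w) 0 (length (Vn n)).

Definition Zu (n : nat) (u : pt) : R :=
  / fold_right Rplus 0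
      (map (fun w => if ptb u w then 0 else / (INR (dist n u w)) ^ 2) (Vn n)).

Definition pchoose (n : nat) (u v : pt) : R :=
  if ptb u v then 0 else Zu n u * / (INR (dist n u v)) ^ 2.

(* An outcome of the random long-range choices is recorded as an association
   list of pairs (u, choice of u). *)
Fixpoint lookup (c : list (pt * pt)) (x : pt) : option pt :=
  match c with
  | [] => None
  | (a, b) :: c' => if ptb a x then Some b else lookup c' x
  end.

Definition Cb (c : list (pt * pt)) (x y : pt) : bool :=
  match lookup c x with Some z => ptb z y | None => false end.

Definition typew (n : nat) (c : list (pt * pt)) (x y : pt) : bool :=
  (Nat.leb 2 (dist n x y) && Cb c x y)%bool.

Definition E7 (n : nat) (u : pt) (c : list (pt * pt)) : bool :=
  existsb (fun a => existsb (fun b =>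
     (negb (ptb u a) && negb (ptb u b) && negb (ptb a b)
      && typew n c u a && typew n c a b && typew n c b u)%bool) (Vn n)) (Vn n).

(* Expectation of the indicator of an event under the product measure in which
   every vertex of vs independently chooses w with probability pchoose n v w. *)
Fixpoint prodExp (n : nat) (E : list (pt * pt) -> bool)
    (vs : list pt) (acc : list (pt * pt)) : R :=
  match vs with
  | [] => if E acc then 1 else 0
  | v :: vs' =>
      fold_right Rplus 0
        (map (fun w => pchoose n v w * prodExp n E vs' ((v, w) :: acc)) (Vn n))
  end.

Definition Pr (n : nat) (E : list (pt * pt) -> bool) : R :=
  prodExp n E (Vn n) [].

(* Main.v *)
Require Import Defs.
From Stdlib Require Import Reals ZArith List Lia Lra FinFun Bool.
Import ListNotations.
Open Scope R_scope.

Definition sumR {A} (l : list A) (f : A -> R) : R := fold_right Rplus 0 (map f l).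

Lemma sumR_nil {A} (f : A -> R) : sumR [] f = 0.
Proof. reflexivity. Qed.
Lemma sumR_cons {A} a l (f : A -> R) : sumR (a :: l) f = f a + sumR l f.
Proof. reflexivity. Qed.
Lemma sumR_app {A} l1 l2 (f : A -> R) : sumR (l1 ++ l2) f = sumR l1 f + sumR l2 f.
Proof. induction l1; simpl; rewrite ?sumR_nil, ?sumR_cons; unfold sumR in *; simpl; try rewrite IHl1; lra. Qed.
Lemma sumR_ext {A} l (f g : A -> R) : (forall x, In x l -> f x = g x) -> sumR l f = sumR l g.
Proof. induction l; intros H; unfold sumR in *; simpl; auto. rewrite H, IHl; auto. intros; apply H; simpl; auto. left; auto. Qed.
Lemma sumR_le {A} l (f g : A -> R) : (forall x, In x l -> f x <= g x) -> sumR l f <= sumR l g.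
Proof. induction l; intros H; unfold sumR in *; simpl. lra. apply Rplus_le_compat. apply H; simpl; auto. apply IHl; intros; apply H; simpl; auto. Qed.
Lemma sumR_nonneg {A} l (f : A -> R) : (forall x, In x l -> 0 <= f x) -> 0 <= sumR l f.
Proof. intros H. replace 0 with (sumR l (fun _ => 0)). apply sumR_le; auto.
  induction l; unfold sumR in *; simpl; auto. rewrite IHl. lra. intros; apply H; simpl; auto. Qed.
Lemma sumR_plus {A} l (f g : A -> R) : sumR l (fun x => f x + g x) = sumR l f + sumR l g.
Proof. induction l; unfold sumR in *; simpl; lra. Qed.
Lemma sumR_scal {A} l c (f : A -> R) : sumR l (fun x => c * f x) = c * sumR l f.
Proof. induction l; unfold sumR in *; simpl. lra. rewrite IHl. lra. Qed.
Lemma sumR_zero {A} l : sumR l (fun _ : A => 0) = 0.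
Proof. induction l; unfold sumR in *; simpl; auto. rewrite IHl; lra. Qed.
Lemma sumR_swap {A B} (l1 : list A) (l2 : list B) (f : A -> B -> R) :
  sumR l1 (fun a => sumR l2 (fun b => f a b)) = sumR l2 (fun b => sumR l1 (fun a => f a b)).
Proof. induction l1; simpl.
  - rewrite sumR_nil. symmetry. apply sumR_zero.
  - rewrite sumR_cons, IHl1. rewrite <- sumR_plus. apply sumR_ext. intros. rewrite sumR_cons. auto. Qed.
Lemma sumR_ge_elem {A} l (f : A -> R) x : (forall y, In y l -> 0 <= f y) -> In x l -> f x <= sumR l f.
Proof. induction l; simpl; intros H Hx. destruct Hx. rewrite sumR_cons. destruct Hx as [<-|Hx].
  - assert (0 <= sumR l f) by (apply sumR_nonneg; auto). lra.
  - assert (0 <= f a) by auto. assert (f x <= sumR l f) by auto. lra. Qed.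
Lemma sumR_const {A} l c : sumR l (fun _ : A => c) = INR (length l) * c.
Proof. induction l; unfold sumR in *; simpl length; simpl. lra. rewrite IHl. destruct l; simpl; lra. Qed.

Lemma sumR_incl {A} (dec : forall x y : A, {x = y} + {x <> y}) (L l : list A) (f : A -> R) :
  (forall x, In x L -> 0 <= f x) -> NoDup l -> incl l L -> sumR l f <= sumR L f.
Proof.
  revert l. induction L as [|a L IH]; intros l Hf Hnd Hin.
  - destruct l. apply Rle_refl. exfalso. apply (Hin a). simpl; auto.
  - rewrite sumR_cons. destruct (in_dec dec a l) as [Ha|Ha].
    + destruct (in_split _ _ Ha) as [l1 [l2 E]]. subst l.
      rewrite sumR_app, sumR_cons.
      assert (sumR (l1 ++ l2) f <= sumR L f).
      { apply IH. intros; apply Hf; simpl; auto. eapply NoDup_remove_1; eauto.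
        intros y Hy. pose proof (NoDup_remove_2 _ _ _ Hnd) as Hn.
        assert (In y (l1 ++ a :: l2)) by (apply in_app_or in Hy; apply in_or_app; destruct Hy; simpl; auto).
        destruct (Hin y H) as [E|E]. subst; contradiction. auto. }
      rewrite sumR_app in H. lra.
    + assert (sumR l f <= sumR L f).
      { apply IH. intros; apply Hf; simpl; auto. auto.
        intros y Hy. destruct (Hin y Hy) as [E|E]. subst; contradiction. auto. }
      assert (0 <= f a) by (apply Hf; simpl; auto). lra.
Qed.

Definition prodR {A} (l : list A) (f : A -> R) : R := fold_right Rmult 1 (map f l).

Lemma pt_dec : forall p q : pt, {p = q} + {p <> q}.
Proof. intros [[a b] c] [[d e] f].
  destruct (Z.eq_dec a d), (Z.eq_dec b e), (Z.eq_dec c f); subst; auto;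
  right; intro H; inversion H; auto. Qed.

Lemma ptb_spec p q : ptb p q = true <-> p = q.
Proof. destruct p as [[a b] c], q as [[d e] f]. simpl.
  rewrite !andb_true_iff, !Z.eqb_eq. split. intros [[-> ->] ->]; auto.
  intros H; inversion H; auto. Qed.
Lemma ptb_refl p : ptb p p = true.
Proof. apply ptb_spec; auto. Qed.
Lemma ptb_false p q : p <> q -> ptb p q = false.
Proof. intros H. destruct (ptb p q) eqn:E; auto. apply ptb_spec in E; contradiction. Qed.

Definition px (p : pt) : Z := fst (fst p).
Definition py (p : pt) : Z := snd (fst p).
Definition pz (p : pt) : Z := snd p.

Lemma adjb_spec p q : adjb p q = true <->
  p <> q /\ (Z.abs (px p - px q) <= 1)%Z /\ (Z.abs (py p - py q) <= 1)%Z /\ (Z.abs (pz p - pz q) <= 1)%Z.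
Proof. destruct p as [[a b] c], q as [[d e] f]. unfold adjb, px,py,pz; simpl.
  rewrite !andb_true_iff, !Z.leb_le, negb_true_iff.
  split. intros [[[H1 H2] H3] H4]. repeat split; auto. intro E. rewrite <- ptb_spec in E. simpl in E. congruence.
  intros [H1 [H2 [H3 H4]]]. repeat split; auto. apply (ptb_false (a,b,c) (d,e,f)) in H1. exact H1. Qed.

Lemma in_zrange n z : In z (zrange n) <-> (- Z.of_nat n <= z <= Z.of_nat n)%Z.
Proof. unfold zrange. rewrite in_map_iff. split.
  - intros [i [<- Hi]]. apply in_seq in Hi. lia.
  - intros H. exists (Z.to_nat (z + Z.of_nat n)). split. lia. apply in_seq. lia. Qed.

Lemma NoDup_zrange n : NoDup (zrange n).
Proof. unfold zrange. apply Injective_map_NoDup. intros x y H. lia. apply seq_NoDup. Qed.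

Lemma NoDup_list_prod' {A B} (l1 : list A) (l2 : list B) : NoDup l1 -> NoDup l2 -> NoDup (list_prod l1 l2).
Proof. induction l1; intros H1 H2; simpl. constructor. inversion H1; subst.
  apply NoDup_app. apply Injective_map_NoDup; auto. intros x y E; inversion E; auto.
  apply IHl1; auto.
  intros [x y] Hx Hy. apply in_map_iff in Hx. destruct Hx as [z [E _]]. inversion E; subst.
  apply in_prod_iff in Hy. destruct Hy; contradiction. Qed.

Lemma in_Vn n p : In p (Vn n) <-> (Z.abs (px p) + Z.abs (py p) + Z.abs (pz p) = Z.of_nat n)%Z.
Proof. destruct p as [[a b] c]. unfold Vn, px, py, pz; simpl. rewrite filter_In. rewrite (in_prod_iff (list_prod (zrange n) (zrange n)) (zrange n) (a,b) c), (in_prod_iff (zrange n) (zrange n) a b), !in_zrange, Z.eqb_eq.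
  split. intros [_ H]; auto. intros H. repeat split; auto; lia. Qed.

Lemma NoDup_Vn n : NoDup (Vn n).
Proof. unfold Vn. apply NoDup_filter. repeat apply NoDup_list_prod'; apply NoDup_zrange. Qed.

Lemma length_Vn n : (2 * n + 1 <= length (Vn n))%nat.
Proof.
  set (l := map (fun z => (z, (Z.of_nat n - Z.abs z)%Z, 0%Z)) (zrange n)).
  assert (length l = 2 * n + 1)%nat by (unfold l, zrange; rewrite !length_map, length_seq; lia).
  rewrite <- H. apply NoDup_incl_length.
  - apply Injective_map_NoDup. intros x y E; inversion E; auto. apply NoDup_zrange.
  - intros p Hp. unfold l in Hp. apply in_map_iff in Hp. destruct Hp as [z [<- Hz]].
    apply in_zrange in Hz. apply in_Vn. unfold px,py,pz; simpl. lia.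
Qed.

Lemma within_step n k u v w : withinb n k u v = true -> In v (Vn n) -> adjb v w = true ->
  withinb n (S k) u w = true.
Proof. intros H1 H2 H3. simpl. apply orb_true_iff. right. apply existsb_exists.
  exists v. rewrite H1, H3. auto. Qed.

Lemma within0 n u : withinb n 0 u u = true.
Proof. simpl. apply ptb_refl. Qed.

Definition close (k : nat) (u w : pt) : Prop :=
  (Z.abs (px u - px w) <= Z.of_nat k /\ Z.abs (py u - py w) <= Z.of_nat k /\ Z.abs (pz u - pz w) <= Z.of_nat k)%Z.

Lemma within_close n k u w : withinb n k u w = true -> close k u w.
Proof. revert w. induction k; intros w H; simpl in H.
  - apply ptb_spec in H. subst. unfold close. lia.
  - apply orb_true_iff in H. destruct H as [H|H].
    + apply IHk in H. unfold close in *. lia.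
    + apply existsb_exists in H. destruct H as [v [_ H]]. apply andb_true_iff in H. destruct H as [H1 H2].
      apply IHk in H1. apply adjb_spec in H2. unfold close in *. lia.
Qed.

Lemma search_le P k0 fuel k : P k = true -> (k0 <= k)%nat -> (search P k0 fuel <= k)%nat.
Proof. revert k0. induction fuel; intros k0 H1 H2; simpl. auto.
  destruct (P k0) eqn:E. auto. apply IHfuel; auto. destruct (Nat.eq_dec k0 k). subst; congruence. lia. Qed.

Lemma search_cases P k0 fuel : P (search P k0 fuel) = true \/ search P k0 fuel = (k0 + fuel)%nat.
Proof. revert k0. induction fuel; intros k0; simpl. right; lia.
  destruct (P k0) eqn:E. left; auto. destruct (IHfuel (S k0)) as [H|H]. left; auto. right; lia. Qed.

Lemma Pdist_le n k u w : withinb n k u w = true -> (Defs.dist n u w <= k)%nat.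
Proof. intros H. unfold Defs.dist. apply search_le with (P := fun k => withinb n k u w); auto. lia. Qed.

Lemma Pdist_close n u w : In u (Vn n) -> In w (Vn n) -> close (Defs.dist n u w) u w.
Proof. intros Hu Hw. unfold Defs.dist.
  destruct (search_cases (fun k => withinb n k u w) 0 (length (Vn n))) as [H|H].
  - apply within_close with (n := n); auto.
  - rewrite H. pose proof (length_Vn n). apply in_Vn in Hu. apply in_Vn in Hw. unfold close. simpl. lia.
Qed.

Lemma pt_neq_coord u w : u <> w -> (px u <> px w \/ py u <> py w \/ pz u <> pz w)%Z.
Proof. destruct u as [[a b] c], w as [[d e] f]; unfold px,py,pz; simpl. intros H.
  destruct (Z.eq_dec a d), (Z.eq_dec b e), (Z.eq_dec c f); subst; auto. Qed.

Lemma Pdist_pos n u w : In u (Vn n) -> In w (Vn n) -> u <> w -> (1 <= Defs.dist n u w)%nat.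
Proof. intros Hu Hw Hne. pose proof (Pdist_close n u w Hu Hw). pose proof (pt_neq_coord u w Hne).
  unfold close in H. lia. Qed.

Definition good (n : nat) (t : pt -> pt) : Prop :=
  (forall p, In p (Vn n) -> In (t p) (Vn n)) /\
  (forall p q, adjb p q = true -> adjb (t p) (t q) = true) /\ Injective t.

Definition mkp (a b c : Z) : pt := (a, b, c).

Definition flip (s1 s2 s3 : Z) (p : pt) : pt := (s1 * px p, s2 * py p, s3 * pz p)%Z.
Definition sw12 (p : pt) : pt := (py p, px p, pz p).
Definition sw13 (p : pt) : pt := (pz p, py p, px p).

Lemma pt_eta p : p = (px p, py p, pz p).
Proof. destruct p as [[a b] c]; reflexivity. Qed.

Lemma pt_ext p q : px p = px q -> py p = py q -> pz p = pz q -> p = q.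
Proof. destruct p as [[a b] c], q as [[d e] f]; unfold px,py,pz; simpl; intros; subst; auto. Qed.

Lemma sgn_abs s a : (s = 1 \/ s = -1)%Z -> Z.abs (s * a) = Z.abs a.
Proof. intros [->| ->]; lia. Qed.

Lemma good_flip n s1 s2 s3 : (s1 = 1 \/ s1 = -1)%Z -> (s2 = 1 \/ s2 = -1)%Z -> (s3 = 1 \/ s3 = -1)%Z ->
  good n (flip s1 s2 s3).
Proof. intros H1 H2 H3. unfold good, flip. split; [|split].
  - intros p Hp. apply in_Vn in Hp. apply in_Vn. unfold px,py,pz in *; simpl in *.
    rewrite !sgn_abs; auto.
  - intros p q H. apply adjb_spec in H. apply adjb_spec. unfold px,py,pz in *; simpl in *.
    destruct H as [Hne [A [B C]]]. split.
    + intro E. inversion E. apply Hne. apply pt_ext; unfold px,py,pz; destruct H1 as [->| ->]; destruct H2 as [->| ->]; destruct H3 as [->| ->]; lia.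
    + rewrite <- !Z.mul_sub_distr_l, !sgn_abs; auto.
  - intros p q E. inversion E. apply pt_ext; destruct H1 as [->| ->]; destruct H2 as [->| ->]; destruct H3 as [->| ->]; lia.
Qed.

Lemma good_sw12 n : good n sw12.
Proof. unfold good, sw12. split; [|split].
  - intros p Hp. apply in_Vn in Hp. apply in_Vn. unfold px,py,pz in *; simpl in *. lia.
  - intros p q H. apply adjb_spec in H. apply adjb_spec. unfold px,py,pz in *; simpl in *.
    destruct H as [Hne [A [B C]]]. split; [|lia]. intro E. inversion E. apply Hne. apply pt_ext; auto.
  - intros p q E. inversion E. apply pt_ext; auto.
Qed.

Lemma good_sw13 n : good n sw13.
Proof. unfold good, sw13. split; [|split].
  - intros p Hp. apply in_Vn in Hp. apply in_Vn. unfold px,py,pz in *; simpl in *. lia.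
  - intros p q H. apply adjb_spec in H. apply adjb_spec. unfold px,py,pz in *; simpl in *.
    destruct H as [Hne [A [B C]]]. split; [|lia]. intro E. inversion E. apply Hne. apply pt_ext; auto.
  - intros p q E. inversion E. apply pt_ext; auto.
Qed.

Lemma good_comp n f g : good n f -> good n g -> good n (fun p => f (g p)).
Proof. intros [A [B C]] [D [E F]]. split; [|split]; auto. intros p q H. apply F, C, H. Qed.

Lemma canonical n u : In u (Vn n) -> exists t a b c, good n t /\ (0 <= a /\ 0 <= b /\ 0 <= c /\ a + b + c = Z.of_nat n /\ Z.of_nat n <= 3 * a)%Z /\ u = t (a, b, c).
Proof. intros Hu. apply in_Vn in Hu.
  set (s := fun z : Z => if (z <? 0)%Z then (-1)%Z else 1%Z).
  assert (Hs : forall z, (s z = 1 \/ s z = -1)%Z) by (intros z; unfold s; destruct (z <? 0)%Z; auto).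
  assert (Hs2 : forall z, (s z * Z.abs z = z)%Z) by (intros z; unfold s; destruct (Z.ltb_spec z 0); lia).
  set (fl := flip (s (px u)) (s (py u)) (s (pz u))).
  assert (Gf : good n fl) by (apply good_flip; auto).
  assert (E0 : fl (Z.abs (px u), Z.abs (py u), Z.abs (pz u)) = u).
  { unfold fl, flip, px, py, pz; simpl. rewrite !Hs2. symmetry; apply pt_eta. }
  destruct (Z.le_ge_cases (Z.abs (py u)) (Z.abs (px u))) as [L1|L1];
  destruct (Z.le_ge_cases (Z.abs (pz u)) (Z.abs (px u))) as [L2|L2];
  destruct (Z.le_ge_cases (Z.abs (pz u)) (Z.abs (py u))) as [L3|L3].
  all: first
   [ exists fl, (Z.abs (px u)), (Z.abs (py u)), (Z.abs (pz u)); split; [auto|split; [lia|auto]]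
   | exists (fun p => fl (sw12 p)), (Z.abs (py u)), (Z.abs (px u)), (Z.abs (pz u)); split;
       [apply good_comp; auto; apply good_sw12|split; [lia|auto]]
   | exists (fun p => fl (sw13 p)), (Z.abs (pz u)), (Z.abs (py u)), (Z.abs (px u)); split;
       [apply good_comp; auto; apply good_sw13|split; [lia|auto]] ].
Qed.

Lemma walk n t (a b c : Z) (i j : nat) : good n t -> (0 <= a /\ 0 <= b /\ 0 <= c /\ a + b + c = Z.of_nat n)%Z ->
  (Z.of_nat (i + j) <= a)%Z ->
  withinb n (i + j) (t (a, b, c)) (t (a - Z.of_nat i - Z.of_nat j, b + Z.of_nat i, c + Z.of_nat j)%Z) = true.
Proof. intros [G1 [G2 G3]] H.
  assert (HV : forall x y z, (0 <= x /\ 0 <= y /\ 0 <= z /\ x + y + z = Z.of_nat n)%Z -> In (t (x,y,z)) (Vn n)).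
  { intros x y z Hx. apply G1. apply in_Vn. unfold px,py,pz; simpl. lia. }
  induction j; intros Hij.
  - induction i.
    + simpl. replace (a - 0 - 0)%Z with a by lia. replace (b+0)%Z with b by lia. replace (c+0)%Z with c by lia. apply ptb_refl.
    + replace (S i + 0)%nat with (S (i + 0)) by lia. eapply within_step.
      * apply IHi. lia.
      * apply HV. lia.
      * apply G2. apply adjb_spec. unfold px,py,pz; simpl. split; [|lia].
        intro E. inversion E. lia.
  - replace (i + S j)%nat with (S (i + j)) by lia. eapply within_step.
    + apply IHj. lia.
    + apply HV. lia.
    + apply G2. apply adjb_spec. unfold px,py,pz; simpl. split; [|lia].
      intro E. inversion E. lia.
Qed.

Definition Sx (n : nat) (x : pt) : R :=
  sumR (Vn n) (fun w => if ptb x w then 0 else / INR (Defs.dist n x w) ^ 2).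

Lemma Zu_Sx n x : Zu n x = / Sx n x.
Proof. reflexivity. Qed.

Definition pairs (A : nat) : list (nat * nat) :=
  flat_map (fun k => map (fun i => (k, i)) (seq 0 (S k))) (seq 1 A).

Lemma sumR_flat_map {A B} (l : list A) (f : A -> list B) g :
  sumR (flat_map f l) g = sumR l (fun a => sumR (f a) g).
Proof. induction l; simpl. auto. rewrite sumR_app, sumR_cons, IHl. auto. Qed.

Lemma sumR_map {A B} (l : list A) (h : A -> B) g : sumR (map h l) g = sumR l (fun a => g (h a)).
Proof. unfold sumR. rewrite map_map. auto. Qed.

Lemma NoDup_pairs A : NoDup (pairs A).
Proof. unfold pairs. generalize 1%nat. induction A; intros s. constructor. cbn [seq flat_map].
  apply NoDup_app. apply Injective_map_NoDup. intros x y E; inversion E; auto. apply (seq_NoDup (S s) 0).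
  apply IHA. intros [k i] H1 H2. apply in_map_iff in H1. destruct H1 as [z [E _]]. inversion E; subst.
  apply in_flat_map in H2. destruct H2 as [k' [Hk' H2]]. apply in_map_iff in H2. destruct H2 as [z' [E' _]].
  inversion E'; subst. apply in_seq in Hk'. lia. Qed.

Lemma in_pairs A k i : In (k, i) (pairs A) -> (1 <= k <= A /\ i <= k)%nat.
Proof. unfold pairs. intros H. apply in_flat_map in H. destruct H as [k' [Hk H]]. apply in_map_iff in H.
  destruct H as [z [E Hz]]. inversion E; subst. apply in_seq in Hk. apply in_seq in Hz. lia. Qed.

Lemma sum_pairs A : sumR (pairs A) (fun ki => / INR (fst ki) ^ 2) = sumR (seq 1 A) (fun k => (INR k + 1) / INR k ^ 2).
Proof. unfold pairs. rewrite sumR_flat_map. apply sumR_ext. intros k _. rewrite sumR_map. simpl.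
  rewrite sumR_const. change (length (0%nat :: seq 1 k)) with (S (length (seq 1 k))). rewrite length_seq, S_INR. unfold Rdiv. ring. Qed.

Lemma NoDup_map_on {A B} (f : A -> B) l : (forall x y, In x l -> In y l -> f x = f y -> x = y) -> NoDup l -> NoDup (map f l).
Proof. induction l; intros H Hn; simpl; constructor.
  - intro Hin. apply in_map_iff in Hin. destruct Hin as [y [E Hy]]. inversion Hn; subst.
    assert (y = a) by (apply H; simpl; auto). subst; contradiction.
  - apply IHl. intros; apply H; simpl; auto. inversion Hn; auto. Qed.

Lemma ln_le_exp y z : 0 < y -> y <= exp z -> ln y <= z.
Proof. intros H1 H2. destruct H2 as [H2|H2]. left. rewrite <- (ln_exp z). apply ln_increasing; auto.
  right. rewrite H2, ln_exp. auto. Qed.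

Lemma ln_ge0 x : 1 <= x -> 0 <= ln x.
Proof. intros H. destruct H as [H|H]. left. rewrite <- ln_1. apply ln_increasing; lra. rewrite <- H, ln_1; lra. Qed.

Lemma harm A : (1 <= A)%nat -> 1 + ln (INR A + 1) <= sumR (seq 1 A) (fun k => (INR k + 1) / INR k ^ 2).
Proof. induction A; intros H. lia. destruct A.
  - simpl. rewrite sumR_cons, sumR_nil. simpl.
    assert (ln (1+1) <= 1). { apply ln_le_exp. lra. pose proof (exp_ineq1_le 1). lra. } replace ((1 + 1) / (1 * (1 * 1)) + 0) with 2 by field. lra.
  - rewrite seq_S, sumR_app, sumR_cons, sumR_nil. assert (IH := IHA ltac:(lia)).
    set (a := INR (S A)) in *. replace (INR (1 + S A)) with (a + 1) by (unfold a; rewrite plus_INR, S_INR; simpl; lra).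
    rewrite S_INR. fold a.
    assert (Ha : 1 <= a) by (unfold a; rewrite S_INR; pose proof (pos_INR A); lra).
    assert (ln (a + 1 + 1) - ln (a + 1) <= / (a + 1)).
    { replace (a + 1 + 1) with ((a + 1) * (1 + / (a+1))) by (field; lra).
      rewrite ln_mult by (try apply Rplus_lt_0_compat; try apply Rinv_0_lt_compat; lra).
      assert (ln (1 + / (a+1)) <= / (a+1)). { apply ln_le_exp. assert (0 < / (a+1)) by (apply Rinv_0_lt_compat; lra). lra. apply exp_ineq1_le. }
      lra. }
    assert (/ (a + 1) <= (a + 1 + 1) / (a + 1) ^ 2).
    { unfold Rdiv. replace ((a+1+1) * / (a+1)^2) with (/ (a+1) + / (a+1)^2) by (field; lra).
      assert (0 < / (a+1)^2) by (apply Rinv_0_lt_compat; nra). lra. }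
    lra.
Qed.

Lemma Sx_nonneg_terms n x : forall w, 0 <= (if ptb x w then 0 else / INR (Defs.dist n x w) ^ 2).
Proof. intros w. destruct (ptb x w). lra. destruct (Defs.dist n x w). simpl. rewrite Rmult_0_l, Rinv_0. lra.
  apply Rlt_le, Rinv_0_lt_compat. apply pow_lt. apply lt_0_INR. lia. Qed.

Lemma Sx_lower n x : (1 <= n)%nat -> In x (Vn n) -> 1 + ln (INR n / 3 + 1) <= Sx n x.
Proof. intros Hn Hx.
  destruct (canonical n x Hx) as [t [a [b [c [Gt [Habc ->]]]]]].
  set (A := Z.to_nat a).
  set (fam := fun ki : nat * nat => let (k, i) := ki in
     t (a - Z.of_nat i - Z.of_nat (k - i), b + Z.of_nat i, c + Z.of_nat (k - i))%Z).
  assert (Hfam : forall k i, In (k, i) (pairs A) ->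
     In (fam (k,i)) (Vn n) /\ fam (k,i) <> t (a,b,c) /\ (Defs.dist n (t (a,b,c)) (fam (k,i)) <= k)%nat).
  { intros k i Hki. apply in_pairs in Hki. destruct Gt as [G1 [G2 G3]]. simpl. split; [|split].
    - apply G1. apply in_Vn. unfold px,py,pz; simpl. unfold A in Hki. lia.
    - intro E. apply G3 in E. inversion E. lia.
    - replace k with (i + (k - i))%nat at 3 by lia. apply Pdist_le. apply walk. split; auto. lia. unfold A in Hki. lia. }
  assert (HA : (1 <= A)%nat) by (unfold A; lia).
  eapply Rle_trans. 2: eapply (sumR_incl pt_dec (Vn n) (map fam (pairs A))).
  - rewrite sumR_map. eapply Rle_trans. 2: apply sumR_le with (f := fun ki => / INR (fst ki) ^ 2).
    + rewrite sum_pairs. eapply Rle_trans. 2: apply harm; auto.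
      assert (INR n / 3 + 1 <= INR A + 1).
      { unfold A. rewrite !INR_IZR_INZ, Z2Nat.id by lia.
        assert (IZR (Z.of_nat n) <= 3 * IZR a) by (rewrite <- mult_IZR; apply IZR_le; lia). lra. }
      assert (ln (INR n / 3 + 1) <= ln (INR A + 1)).
      { destruct H. left. apply ln_increasing; auto. pose proof (pos_INR n). lra. right; rewrite H; auto. }
      lra.
    + intros [k i] Hki. destruct (Hfam k i Hki) as [H1 [H2 H3]]. simpl fst.
      rewrite ptb_false by auto. apply in_pairs in Hki.
      pose proof (Pdist_pos n _ _ Hx H1 (fun E => H2 (eq_sym E))) as Hd1.
      apply Rinv_le_contravar. apply pow_lt. apply lt_0_INR; lia.
      apply pow_incr. split. apply pos_INR. apply le_INR; auto.
  - intros; apply Sx_nonneg_terms.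
  - apply NoDup_map_on. 2: apply NoDup_pairs.
    intros [k i] [k' i'] H1 H2 E. apply in_pairs in H1. apply in_pairs in H2. simpl in E.
    apply (proj2 (proj2 Gt)) in E. inversion E. f_equal; lia.
  - intros w Hw. apply in_map_iff in Hw. destruct Hw as [[k i] [<- Hki]]. apply Hfam; auto.
Qed.

Definition hh (p : Z) : R := / (IZR (Z.max (Z.abs p) 1)) ^ 2.
Definition psi (j : Z) : R := if (1 <=? j)%Z then 5 - 2 / (2 * IZR j - 1) else 2 / (1 - 2 * IZR j).

Lemma key_ineq J : 1 <= J -> / J ^ 2 <= 2 / (2 * J - 1) - 2 / (2 * J + 1).
Proof. intros H. replace (2 / (2 * J - 1) - 2 / (2 * J + 1)) with (/ (J^2 - /4)) by (field; repeat split; nra).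
  apply Rinv_le_contravar. nra. lra. Qed.

Lemma hh_step j : hh j <= psi (j + 1) - psi j.
Proof. unfold hh, psi. destruct (Z.leb_spec 1 j) as [H|H]; destruct (Z.leb_spec 1 (j+1)) as [H'|H']; try lia.
  - rewrite Z.max_l by lia. rewrite Z.abs_eq by lia. rewrite plus_IZR.
    assert (1 <= IZR j) by (apply IZR_le; lia).
    pose proof (key_ineq (IZR j) H0). replace (2 * (IZR j + 1) - 1) with (2 * IZR j + 1) by ring. lra.
  - assert (j = 0)%Z by lia. subst. simpl. replace (2 * 1 - 1) with 1 by ring. replace (1 - 2 * 0) with 1 by ring. change (Z.max 0 1) with 1%Z. replace (/ (IZR 1 * (IZR 1 * 1))) with 1 by (simpl; field). lra.
  - rewrite Z.max_l by lia. rewrite Z.abs_neq by lia. rewrite opp_IZR, plus_IZR.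
    assert (1 <= - IZR j) by (rewrite <- opp_IZR; apply IZR_le; lia).
    pose proof (key_ineq (- IZR j) H0).
    replace (1 - 2 * (IZR j + 1)) with (2 * - IZR j - 1) by ring.
    replace (1 - 2 * IZR j) with (2 * - IZR j + 1) by ring. lra.
Qed.

Lemma psi_bounds j : 0 <= psi j <= 5.
Proof. unfold psi. destruct (Z.leb_spec 1 j) as [H|H].
  - assert (1 <= IZR j) by (apply IZR_le; lia).
    assert (0 < 2 / (2 * IZR j - 1) <= 2). { split. apply Rdiv_lt_0_compat; lra.
      unfold Rdiv. apply Rle_trans with (2 * 1). apply Rmult_le_compat_l. lra.
      rewrite <- Rinv_1. apply Rinv_le_contravar; lra. lra. }
    lra.
  - assert (IZR j <= 0) by (apply IZR_le; lia).
    assert (0 < 2 / (1 - 2 * IZR j) <= 2). { split. apply Rdiv_lt_0_compat; lra.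
      unfold Rdiv. apply Rle_trans with (2 * 1). apply Rmult_le_compat_l. lra.
      rewrite <- Rinv_1. apply Rinv_le_contravar; lra. lra. }
    lra.
Qed.

Lemma sum_hh_seq t N : sumR (seq 0 N) (fun i => hh (t + Z.of_nat i)) <= psi (t + Z.of_nat N) - psi t.
Proof. induction N.
  - simpl. rewrite sumR_nil, Z.add_0_r. lra.
  - rewrite seq_S, sumR_app, sumR_cons, sumR_nil. simpl (0 + N)%nat.
    pose proof (hh_step (t + Z.of_nat N)). replace (t + Z.of_nat (S N))%Z with (t + Z.of_nat N + 1)%Z by lia. lra.
Qed.

Lemma sum_hh_zrange n x : sumR (zrange n) (fun z => hh (z - x)) <= 5.
Proof. unfold zrange. unfold sumR. rewrite map_map. fold (sumR (seq 0 (2 * n + 1)) (fun i => hh (Z.of_nat i - Z.of_nat n - x))).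
  rewrite (sumR_ext _ _ (fun i => hh ((- Z.of_nat n - x) + Z.of_nat i))) by (intros; f_equal; lia).
  pose proof (sum_hh_seq (- Z.of_nat n - x) (2 * n + 1)). pose proof (psi_bounds (- Z.of_nat n - x + Z.of_nat (2 * n + 1))).
  pose proof (psi_bounds (- Z.of_nat n - x)). lra. Qed.

Lemma hh_pos p : 0 < hh p.
Proof. unfold hh. apply Rinv_0_lt_compat. apply pow_lt. apply IZR_lt. lia. Qed.

Lemma count_abs l m : NoDup l -> sumR l (fun z => if (Z.abs z =? m)%Z then 1 else 0) <= 2.
Proof. intros Hl.
  assert (E : sumR l (fun z => if (Z.abs z =? m)%Z then 1 else 0) = INR (length (filter (fun z => Z.abs z =? m)%Z l))).
  { clear Hl. induction l; simpl. reflexivity. rewrite sumR_cons, IHl. destruct (Z.abs a =? m)%Z; simpl length; rewrite ?S_INR; lra. }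
  rewrite E. replace 2 with (INR (length [m; (-m)%Z])) by (simpl; lra). apply le_INR.
  apply NoDup_incl_length. apply NoDup_filter; auto.
  intros z Hz. apply filter_In in Hz. destruct Hz as [_ Hz]. apply Z.eqb_eq in Hz. simpl.
  destruct (Z.abs_spec z) as [[_ H]|[_ H]]; [left|right; left]; lia.
Qed.

Lemma sumR_filter {A} (P : A -> bool) l f : sumR (filter P l) f = sumR l (fun x => if P x then f x else 0).
Proof. induction l. auto. cbn [filter]. destruct (P a) eqn:E; rewrite ?sumR_cons, IHl, ?E; lra. Qed.

Lemma sumR_prod {A B} (l1 : list A) (l2 : list B) f : sumR (list_prod l1 l2) f = sumR l1 (fun a => sumR l2 (fun b => f (a, b))).
Proof. induction l1; simpl. auto. rewrite sumR_app, sumR_cons, IHl1, sumR_map. auto. Qed.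

Lemma sum_Vn_proj n (H : Z -> Z -> R) : (forall a b, 0 <= H a b) ->
  sumR (Vn n) (fun y => H (px y) (py y)) <= 2 * sumR (zrange n) (fun a => sumR (zrange n) (fun b => H a b)).
Proof. intros Hp. unfold Vn. rewrite sumR_filter, (@sumR_prod (Z*Z) Z), (@sumR_prod Z Z).
  rewrite <- sumR_scal. apply sumR_le. intros a _. rewrite <- sumR_scal. apply sumR_le. intros b _.
  unfold px, py; simpl.
  rewrite (sumR_ext _ _ (fun c => H a b * (if (Z.abs c =? Z.of_nat n - Z.abs a - Z.abs b)%Z then 1 else 0))).
  - rewrite sumR_scal. pose proof (count_abs (zrange n) (Z.of_nat n - Z.abs a - Z.abs b) (NoDup_zrange n)).
    pose proof (Hp a b). nra.
  - intros c _. destruct (Z.eqb_spec (Z.abs a + Z.abs b + Z.abs c) (Z.of_nat n));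
    destruct (Z.eqb_spec (Z.abs c) (Z.of_nat n - Z.abs a - Z.abs b)); try lia; lra.
Qed.

Lemma sum_hh_two n x y : sumR (zrange n) (fun a => sumR (zrange n) (fun b => hh (a - x) * hh (b - y))) <= 25.
Proof.
  rewrite (sumR_ext _ _ (fun a => hh (a - x) * sumR (zrange n) (fun b => hh (b - y)))) by (intros; apply sumR_scal).
  rewrite (sumR_ext _ _ (fun a => sumR (zrange n) (fun b => hh (b - y)) * hh (a - x))) by (intros; ring).
  rewrite sumR_scal. pose proof (sum_hh_zrange n x). pose proof (sum_hh_zrange n y).
  assert (0 <= sumR (zrange n) (fun b => hh (b - y))) by (apply sumR_nonneg; intros; apply Rlt_le, hh_pos).
  assert (0 <= sumR (zrange n) (fun b => hh (b - x))) by (apply sumR_nonneg; intros; apply Rlt_le, hh_pos).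
  nra.
Qed.

Lemma inv_dist_hh x y (d : nat) : close d x y -> (1 <= d)%nat ->
  / INR d ^ 2 * / INR d ^ 2 <= hh (px y - px x) * hh (py y - py x).
Proof. intros [H1 [H2 _]] Hd. unfold hh.
  assert (forall z : Z, (Z.abs z <= Z.of_nat d)%Z -> / INR d ^ 2 <= / IZR (Z.max (Z.abs z) 1) ^ 2).
  { intros z Hz. apply Rinv_le_contravar. apply pow_lt, IZR_lt; lia.
    apply pow_incr. split. apply IZR_le; lia. rewrite INR_IZR_INZ. apply IZR_le. lia. }
  assert (0 <= / INR d ^ 2) by (apply Rlt_le, Rinv_0_lt_compat, pow_lt, lt_0_INR; lia).
  apply Rmult_le_compat; auto.
  apply H. lia. apply H. lia.
Qed.

Definition Bsum (n : nat) (x : pt) (dd : pt -> nat) : R :=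
  sumR (Vn n) (fun y => if ptb x y then 0 else / INR (dd y) ^ 2 * / INR (dd y) ^ 2).

Lemma Bsum_bound n x dd : In x (Vn n) ->
  (forall y, In y (Vn n) -> x <> y -> close (dd y) x y /\ (1 <= dd y)%nat) -> Bsum n x dd <= 50.
Proof. intros Hx Hd. unfold Bsum.
  eapply Rle_trans. apply sumR_le with (g := fun y => hh (px y - px x) * hh (py y - py x)).
  - intros y Hy. destruct (ptb x y) eqn:E. pose proof (hh_pos (px y - px x)). pose proof (hh_pos (py y - py x)). nra.
    assert (x <> y) by (intro; subst; rewrite ptb_refl in E; discriminate).
    destruct (Hd y Hy H). apply inv_dist_hh; auto.
  - eapply Rle_trans. apply (sum_Vn_proj n (fun a b => hh (a - px x) * hh (b - py x))).
    intros; pose proof (hh_pos (a - px x)); pose proof (hh_pos (b - py x)); nra.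
    pose proof (sum_hh_two n (px x) (py x)). lra.
Qed.

Lemma close_sym k x y : close k x y -> close k y x.
Proof. unfold close. lia. Qed.

Lemma Bsum1 n x : In x (Vn n) -> Bsum n x (fun y => Defs.dist n x y) <= 50.
Proof. intros Hx. apply Bsum_bound; auto. intros y Hy Hne. split. apply Pdist_close; auto. apply Pdist_pos; auto. Qed.

Lemma Bsum2 n x : In x (Vn n) -> Bsum n x (fun y => Defs.dist n y x) <= 50.
Proof. intros Hx. apply Bsum_bound; auto. intros y Hy Hne. split. apply close_sym, Pdist_close; auto. apply Pdist_pos; auto. Qed.

Fixpoint PE (n : nat) (F : list (pt * pt) -> R) (vs : list pt) (acc : list (pt * pt)) : R :=
  match vs with
  | [] => F acc
  | v :: vs' => sumR (Vn n) (fun w => pchoose n v w * PE n F vs' ((v, w) :: acc))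
  end.

Lemma prodExp_PE n E vs acc : prodExp n E vs acc = PE n (fun c => if E c then 1 else 0) vs acc.
Proof. revert acc; induction vs; intros acc; simpl. auto. unfold sumR. f_equal. apply map_ext. intros w. rewrite IHvs. auto. Qed.

Lemma PE_mono n F G vs acc : (forall v w, 0 <= pchoose n v w) -> (forall c, F c <= G c) -> PE n F vs acc <= PE n G vs acc.
Proof. intros Hp H. revert acc; induction vs; intros acc; simpl. auto. apply sumR_le. intros w _.
  apply Rmult_le_compat_l; auto. Qed.

Lemma PE_sum {A} n (l : list A) G vs acc : PE n (fun c => sumR l (fun a => G a c)) vs acc = sumR l (fun a => PE n (G a) vs acc).
Proof. revert acc; induction vs as [|v vs IHvs]; intros acc; simpl. auto.
  rewrite (sumR_ext _ _ (fun w => sumR l (fun a => pchoose n v w * PE n (G a) vs ((v, w) :: acc)))).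
  apply sumR_swap. intros w _. rewrite IHvs. rewrite sumR_scal. auto. Qed.

Lemma prodR_cons {A} a l (f : A -> R) : prodR (a :: l) f = f a * prodR l f.
Proof. reflexivity. Qed.
Lemma prodR_ext {A} l (f g : A -> R) : (forall x, In x l -> f x = g x) -> prodR l f = prodR l g.
Proof. induction l; intros H; unfold prodR in *; simpl; auto. rewrite H, IHl; auto. intros; apply H; simpl; auto. left; auto. Qed.

Lemma prod_split (K : list pt) v A (B : pt -> R) : NoDup K ->
  prodR K (fun x => if pt_dec x v then A else B x) =
  (if in_dec pt_dec v K then A else 1) * prodR K (fun x => if pt_dec x v then 1 else B x).
Proof. induction K as [|k K IH]; intros Hn. unfold prodR; simpl. destruct (in_dec pt_dec v []); simpl in *; [contradiction|ring].
  inversion Hn; subst. rewrite !prodR_cons, IH by auto. destruct (pt_dec k v).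
  - subst. destruct (in_dec pt_dec v K); [contradiction|]. destruct (in_dec pt_dec v (v :: K)) as [_|C]; [|exfalso; apply C; simpl; auto]. ring.
  - destruct (in_dec pt_dec v K) as [I|I]; destruct (in_dec pt_dec v (k :: K)) as [I'|I'].
    ring. exfalso; apply I'; simpl; auto. destruct I' as [E|E]; [congruence|contradiction]. ring.
Qed.

Lemma PE_prod n (K : list pt) (phi : pt -> option pt -> R) vs acc :
  NoDup K -> NoDup vs -> (forall v, In v vs -> sumR (Vn n) (fun w => pchoose n v w) = 1) ->
  PE n (fun c => prodR K (fun x => phi x (lookup c x))) vs acc =
  prodR K (fun x => if in_dec pt_dec x vs then sumR (Vn n) (fun w => pchoose n x w * phi x (Some w)) else phi x (lookup acc x)).
Proof. intros HK. revert acc. induction vs as [|v vs IH]; intros acc Hvs Hs; simpl.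
  - apply prodR_ext. intros x _. destruct (in_dec pt_dec x []) as [C|_]; [destruct C|auto].
  - inversion Hvs; subst.
    set (Ex := fun x => sumR (Vn n) (fun w => pchoose n x w * phi x (Some w))).
    set (Bx := fun x => if in_dec pt_dec x vs then Ex x else phi x (lookup acc x)).
    rewrite (sumR_ext _ _ (fun w => prodR K (fun x => if pt_dec x v then 1 else Bx x) * (pchoose n v w * (if in_dec pt_dec v K then phi v (Some w) else 1)))).
    + rewrite sumR_scal. transitivity (prodR K (fun x => if pt_dec x v then Ex v else Bx x)).
      * rewrite (prod_split K v (Ex v) Bx) by auto. destruct (in_dec pt_dec v K).
        -- fold (Ex v). ring.
        -- rewrite (sumR_ext _ _ (fun w => pchoose n v w)) by (intros; ring). rewrite Hs by (simpl; auto). ring.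
      * apply prodR_ext. intros x _. symmetry. unfold Bx. destruct (pt_dec x v).
        -- subst. destruct (pt_dec v v) as [_|C]; [auto|congruence].
        -- destruct (in_dec pt_dec x vs) as [I'|I']; destruct (pt_dec v x) as [E|E]; try congruence; reflexivity.

    + intros w _. rewrite IH; auto. 2: intros; apply Hs; simpl; auto.
      rewrite (prodR_ext K _ (fun x => if pt_dec x v then phi v (Some w) else Bx x)).
      * rewrite prod_split by auto. ring.
      * intros x _. unfold Bx. simpl. destruct (pt_dec x v).
        -- subst. destruct (in_dec pt_dec v vs); [contradiction|]. rewrite ptb_refl. auto.
        -- rewrite ptb_false by auto. auto.
Qed.

Lemma sum_point (l : list pt) y (g : pt -> R) : NoDup l -> In y l -> sumR l (fun w => g w * (if ptb w y then 1 else 0)) = g y.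
Proof. induction l as [|a l IH]; intros Hn Hy. destruct Hy. inversion Hn; subst. rewrite sumR_cons.
  destruct Hy as [<-|Hy].
  - rewrite ptb_refl. rewrite (sumR_ext _ _ (fun _ => 0)). rewrite sumR_zero. ring.
    intros w Hw. rewrite ptb_false. ring. intro; subst; contradiction.
  - rewrite ptb_false. rewrite IH; auto. ring. intro; subst; contradiction.
Qed.

Lemma inv_nonneg x : 0 <= x -> 0 <= / x.
Proof. intros [H|H]. left; apply Rinv_0_lt_compat; auto. rewrite <- H, Rinv_0. lra. Qed.

Lemma Sx_nonneg n x : 0 <= Sx n x.
Proof. apply sumR_nonneg. intros; apply Sx_nonneg_terms. Qed.

Lemma pchoose_nonneg n v w : 0 <= pchoose n v w.
Proof. unfold pchoose. destruct (ptb v w) eqn:E. lra. apply Rmult_le_pos. rewrite Zu_Sx. apply inv_nonneg, Sx_nonneg.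
  pose proof (Sx_nonneg_terms n v w). rewrite E in H. auto.
Qed.

Lemma sum_pchoose n v : 0 < Sx n v -> sumR (Vn n) (fun w => pchoose n v w) = 1.
Proof. intros H. unfold pchoose. rewrite (sumR_ext _ _ (fun w => Zu n v * (if ptb v w then 0 else / INR (Defs.dist n v w) ^ 2))).
  rewrite sumR_scal. rewrite Zu_Sx. fold (Sx n v). field. lra.
  intros w _. destruct (ptb v w); ring. Qed.

Lemma PE_zero n vs acc : PE n (fun _ => 0) vs acc = 0.
Proof. revert acc; induction vs; intros acc; simpl. auto. rewrite (sumR_ext _ _ (fun _ => 0)). apply sumR_zero.
  intros; rewrite IHvs; ring. Qed.

Definition nx (u a b x : pt) : pt := if ptb x u then a else if ptb x a then b else u.
Definition phi3 (u a b x : pt) (o : option pt) : R :=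
  match o with Some y => if ptb y (nx u a b x) then 1 else 0 | None => 0 end.
Definition T3 (u a b : pt) (acc : list (pt * pt)) : R := prodR [u; a; b] (fun x => phi3 u a b x (lookup acc x)).
Definition dstb (u a b : pt) : bool := (negb (ptb u a) && negb (ptb u b) && negb (ptb a b))%bool.

Lemma phi3_nonneg u a b x o : 0 <= phi3 u a b x o.
Proof. unfold phi3. destruct o; [destruct (ptb _ _)|]; lra. Qed.

Lemma T3_nonneg u a b acc : 0 <= T3 u a b acc.
Proof. unfold T3, prodR; simpl. pose proof (phi3_nonneg u a b u (lookup acc u)).
  pose proof (phi3_nonneg u a b a (lookup acc a)). pose proof (phi3_nonneg u a b b (lookup acc b)).
  repeat apply Rmult_le_pos; lra. Qed.

Lemma Cb_lookup acc x y : Cb acc x y = true -> lookup acc x = Some y.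
Proof. unfold Cb. destruct (lookup acc x) eqn:E; [|discriminate]. intros H. apply ptb_spec in H. subst; auto. Qed.

Lemma E7_bound n u acc : (if E7 n u acc then 1 else 0) <=
  sumR (Vn n) (fun a => sumR (Vn n) (fun b => if dstb u a b then T3 u a b acc else 0)).
Proof.
  assert (Hnn : forall a b, 0 <= (if dstb u a b then T3 u a b acc else 0)) by (intros; destruct (dstb u a b); [apply T3_nonneg|lra]).
  destruct (E7 n u acc) eqn:E.
  - unfold E7 in E. apply existsb_exists in E. destruct E as [a [Ha E]]. apply existsb_exists in E. destruct E as [b [Hb E]].
    rewrite !andb_true_iff in E. destruct E as [[[[[H1 H2] H3] H4] H5] H6].
    apply negb_true_iff in H1, H2, H3.
    unfold typew in H4, H5, H6. apply andb_true_iff in H4, H5, H6.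
    destruct H4 as [_ H4], H5 as [_ H5], H6 as [_ H6].
    apply Cb_lookup in H4. apply Cb_lookup in H5. apply Cb_lookup in H6.
    assert (Hab : (if dstb u a b then T3 u a b acc else 0) = 1).
    { unfold dstb. rewrite H1, H2, H3. simpl. unfold T3, prodR, phi3, nx; simpl. rewrite H4, H5, H6.
      rewrite ptb_refl. rewrite (ptb_false a u), ptb_refl. rewrite (ptb_false b u), (ptb_false b a), !ptb_refl. ring.
      all: intro E; subst; rewrite ptb_refl in *; discriminate. }
    rewrite <- Hab.
    eapply Rle_trans. 2: apply (sumR_ge_elem _ _ a). 2: intros; apply sumR_nonneg; intros; apply Hnn. 2: auto.
    apply (sumR_ge_elem _ (fun b => if dstb u a b then T3 u a b acc else 0) b). intros; apply Hnn. auto.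
  - apply sumR_nonneg; intros; apply sumR_nonneg; intros; apply Hnn.
Qed.

Lemma PE_T3 n u a b : (forall v, In v (Vn n) -> 0 < Sx n v) -> In u (Vn n) -> In a (Vn n) -> In b (Vn n) ->
  u <> a -> u <> b -> a <> b ->
  PE n (T3 u a b) (Vn n) [] = pchoose n u a * pchoose n a b * pchoose n b u.
Proof. intros HS Hu Ha Hb H1 H2 H3. unfold T3. rewrite PE_prod.
  - unfold prodR; simpl.
    destruct (in_dec pt_dec u (Vn n)); [|contradiction]. destruct (in_dec pt_dec a (Vn n)); [|contradiction].
    destruct (in_dec pt_dec b (Vn n)); [|contradiction].
    unfold phi3, nx. rewrite ptb_refl, (ptb_false a u), ptb_refl, (ptb_false b u), (ptb_false b a) by auto.
    rewrite !sum_point by (auto; apply NoDup_Vn). ring.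
  - constructor. simpl. intros [E|[E|E]]; auto. constructor. simpl. intros [E|E]; auto. constructor. simpl; auto. constructor.
  - apply NoDup_Vn.
  - intros v Hv. apply sum_pchoose. auto.
Qed.

Lemma Pr_bound n u : (forall v, In v (Vn n) -> 0 < Sx n v) -> In u (Vn n) ->
  Pr n (E7 n u) <= sumR (Vn n) (fun a => sumR (Vn n) (fun b =>
     if dstb u a b then pchoose n u a * pchoose n a b * pchoose n b u else 0)).
Proof. intros HS Hu. unfold Pr. rewrite prodExp_PE.
  eapply Rle_trans. apply PE_mono. apply pchoose_nonneg. apply (E7_bound n u).
  rewrite PE_sum. apply Req_le. apply sumR_ext. intros a Ha. rewrite PE_sum. apply sumR_ext. intros b Hb.
  destruct (dstb u a b) eqn:E.
  - unfold dstb in E. rewrite !andb_true_iff, !negb_true_iff in E. destruct E as [[E1 E2] E3].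
    apply PE_T3; auto; intro C; subst; rewrite ptb_refl in *; discriminate.
  - apply PE_zero.
Qed.

Lemma zeta_ge1 z : infinite_sum (fun i => / (INR (S i)) ^ 3) z -> 1 <= z.
Proof. intros H.
  assert (Hs : forall m, 1 <= sum_f_R0 (fun i => / (INR (S i)) ^ 3) m).
  { set (f := fun i => / (INR (S i)) ^ 3). induction m.
    - unfold f; simpl. lra.
    - change (sum_f_R0 f (S m)) with (sum_f_R0 f m + f (S m)).
      assert (0 <= f (S m)) by (unfold f; apply Rlt_le, Rinv_0_lt_compat, pow_lt, lt_0_INR; lia). lra. }
  destruct (Rle_lt_dec 1 z) as [Hz|Hz]; auto. exfalso.
  destruct (H (1 - z)) as [N HN]. lra. specialize (HN N (Nat.le_refl N)). specialize (Hs N).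
  unfold R_dist in HN. apply Rabs_def2 in HN. lra.
Qed.

Lemma ln3_lt : ln 3 < 3 / 2.
Proof. assert (3 < exp (3/2)).
  { replace (3/2) with (3/4 + 3/4) by field. rewrite exp_plus. pose proof (exp_ineq1_le (3/4)). nra. }
  rewrite <- (ln_exp (3/2)). apply ln_increasing; lra. Qed.

Lemma final_real n z : (1 <= n)%nat -> 1 <= z ->
  50 * (/ (1 + ln (INR n / 3 + 1))) ^ 2 < 36 * (3 * z + / 8) * (ln (2 * INR n) / (ln (INR n + 1)) ^ 3).
Proof. intros Hn Hz.
  assert (HN : 1 <= INR n) by (apply (le_INR 1); auto).
  set (l := ln (INR n / 3 + 1)). set (L := ln (INR n + 1)).
  assert (Hl : 0 <= l) by (apply ln_ge0; lra).
  assert (HL : 0 < L) by (unfold L; rewrite <- ln_1; apply ln_increasing; lra).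
  assert (HL2 : L <= ln 3 + l).
  { unfold L, l. rewrite <- ln_mult by lra. destruct (Rle_lt_or_eq_dec (INR n + 1) (3 * (INR n / 3 + 1))) as [H|H]. lra.
    left; apply ln_increasing; lra. right; rewrite H; auto. }
  pose proof ln3_lt as Hln3.
  assert (H2n : L <= ln (2 * INR n)).
  { unfold L. destruct (Rle_lt_or_eq_dec (INR n + 1) (2 * INR n)) as [H|H]. lra. left; apply ln_increasing; lra. right; rewrite H; auto. }
  set (s := 1 + l). assert (Hs : 1 <= s) by (unfold s; lra).
  assert (Hsl : L < 3 / 2 * s) by (unfold s; lra).
  assert (E1 : 36 * (3 * z + / 8) * (ln (2 * INR n) / L ^ 3) >= 112.5 * / L ^ 2).
  { unfold Rdiv. assert (0 < / L ^ 3) by (apply Rinv_0_lt_compat, pow_lt; lra).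
    assert (36 * (3 * z + / 8) >= 112.5) by lra.
    assert (ln (2 * INR n) * / L ^ 3 >= / L ^ 2).
    { replace (/ L ^ 2) with (L * / L ^ 3) by (field; lra). nra. }
    assert (0 < / L ^ 2) by (apply Rinv_0_lt_compat, pow_lt; lra). nra. }
  assert (E2 : 50 * (/ s) ^ 2 < 112.5 * / L ^ 2).
  { rewrite pow_inv. 
    apply Rmult_lt_reg_r with (s ^ 2 * L ^ 2). apply Rmult_lt_0_compat; apply pow_lt; lra.
    replace (50 * / s ^ 2 * (s ^ 2 * L ^ 2)) with (50 * L ^ 2) by (field; lra).
    replace (112.5 * / L ^ 2 * (s ^ 2 * L ^ 2)) with (112.5 * s ^ 2) by (field; lra).
    nra. }
  fold s. lra.
Qed.

Definition fd (n : nat) (x y : pt) : R := / INR (Defs.dist n x y) ^ 2.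

Lemma fd_nonneg n x y : 0 <= fd n x y.
Proof. unfold fd. apply inv_nonneg. apply pow_le, pos_INR. Qed.

Lemma term_bound n u a b Zm : (forall v, In v (Vn n) -> 0 <= Zu n v <= Zm) -> In a (Vn n) -> In b (Vn n) ->
  (if dstb u a b then pchoose n u a * pchoose n a b * pchoose n b u else 0) <=
  Zu n u * (if ptb u a then 0 else fd n u a) *
   (Zm ^ 2 * ((if ptb a b then 0 else fd n a b * fd n a b) + (if ptb u b then 0 else fd n b u * fd n b u)) / 2).
Proof. intros HZ Ha Hb.
  assert (Hu0 : 0 <= Zu n u) by (rewrite Zu_Sx; apply inv_nonneg, Sx_nonneg).
  destruct (dstb u a b) eqn:E.
  - unfold dstb in E. rewrite !andb_true_iff, !negb_true_iff in E. destruct E as [[E1 E2] E3].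
    unfold pchoose. rewrite E1, E3. rewrite (ptb_false b u), E2.
    2: { intro C; subst; rewrite ptb_refl in E2; discriminate. }
    fold (fd n u a) (fd n a b) (fd n b u).
    destruct (HZ a Ha) as [A1 A2]. destruct (HZ b Hb) as [B1 B2].
    pose proof (fd_nonneg n u a). pose proof (fd_nonneg n a b). pose proof (fd_nonneg n b u).
    set (x := fd n a b) in *. set (y := fd n b u) in *. set (za := Zu n a) in *. set (zb := Zu n b) in *.
    assert (Hzz : za * zb <= Zm ^ 2) by (replace (Zm ^ 2) with (Zm * Zm) by ring; apply Rmult_le_compat; auto).
    assert (Hxy : x * y <= (x * x + y * y) / 2) by (pose proof (Rle_0_sqr (x - y)); unfold Rsqr in *; nra).
    replace (Zu n u * fd n u a * (za * x) * (zb * y)) with (Zu n u * fd n u a * ((za * zb) * (x * y))) by ring.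
    apply Rmult_le_compat_l. apply Rmult_le_pos; auto.
    replace (Zm ^ 2 * (x * x + y * y) / 2) with (Zm ^ 2 * ((x * x + y * y) / 2)) by field.
    apply Rmult_le_compat; try nra.
  - apply Rmult_le_pos. apply Rmult_le_pos; auto. destruct (ptb u a); [lra|apply fd_nonneg].
    unfold Rdiv. apply Rmult_le_pos; [|lra]. apply Rmult_le_pos. apply pow2_ge_0.
    apply Rplus_le_le_0_compat; [destruct (ptb a b)|destruct (ptb u b)]; try lra;
    pose proof (fd_nonneg n a b); pose proof (fd_nonneg n b u); nra.
Qed.

Theorem lemma11 (n : nat) (u : pt) (zeta3 : R) :
  (1 <= n)%nat -> In u (Vn n) ->
  infinite_sum (fun i => / (INR (S i)) ^ 3) zeta3 ->
  Pr n (E7 n u) <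
    36 * (3 * zeta3 + / 8) * (ln (2 * INR n) / (ln (INR n + 1)) ^ 3).
Proof. intros Hn Hu Hz.
  set (sg := 1 + ln (INR n / 3 + 1)).
  assert (Hsg : 1 <= sg) by (unfold sg; pose proof (ln_ge0 (INR n / 3 + 1)); pose proof (pos_INR n); lra).
  assert (HS : forall v, In v (Vn n) -> sg <= Sx n v) by (intros; apply Sx_lower; auto).
  set (Zm := / sg).
  assert (HZ : forall v, In v (Vn n) -> 0 <= Zu n v <= Zm).
  { intros v Hv. rewrite Zu_Sx. split. apply inv_nonneg, Sx_nonneg. apply Rinv_le_contravar; auto; lra. }
  eapply Rle_lt_trans. apply Pr_bound; auto. intros v Hv; specialize (HS v Hv); lra.
  eapply Rle_lt_trans. 2: apply (final_real n zeta3 Hn (zeta_ge1 _ Hz)). fold sg. fold Zm.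
  eapply Rle_trans. apply sumR_le. intros a Ha. apply sumR_le. intros b Hb. apply (term_bound n u a b Zm HZ Ha Hb).
  eapply Rle_trans. apply sumR_le with (g := fun a => Zu n u * (if ptb u a then 0 else fd n u a) * (Zm ^ 2 / 2 * 100)).
  - intros a Ha. set (c := Zu n u * (if ptb u a then 0 else fd n u a)).
    assert (Hc : 0 <= c). { unfold c. apply Rmult_le_pos. apply HZ; auto. destruct (ptb u a); [lra|apply fd_nonneg]. }
    rewrite (sumR_ext _ _ (fun b => (c * (Zm ^ 2 / 2)) * ((if ptb a b then 0 else fd n a b * fd n a b) + (if ptb u b then 0 else fd n b u * fd n b u)))) by (intros; unfold Rdiv; ring).
    rewrite sumR_scal, sumR_plus. pose proof (Bsum1 n a Ha). pose proof (Bsum2 n u Hu). unfold Bsum, fd in *.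
    assert (0 <= c * (Zm ^ 2 / 2)) by (apply Rmult_le_pos; auto; unfold Rdiv; apply Rmult_le_pos; [apply pow2_ge_0|lra]).
    rewrite Rmult_assoc. apply Rmult_le_compat_l. auto. apply Rmult_le_compat_l. unfold Rdiv; apply Rmult_le_pos; [apply pow2_ge_0|lra]. lra.
  - rewrite (sumR_ext _ _ (fun a => (Zu n u * (Zm ^ 2 / 2 * 100)) * (if ptb u a then 0 else / INR (Defs.dist n u a) ^ 2))).
    2: { intros a _. unfold fd. ring. }
    rewrite sumR_scal. fold (Sx n u). rewrite Zu_Sx.
    assert (0 < Sx n u) by (specialize (HS u Hu); lra).
    apply Req_le. field. lra.
Qed.
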